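(* Let the parametric setting, finite element spaces, lifts, finite element solutions and reduced basis solutions be as in the context, and fix $\mu\in\mathcal{D}$. Let $u(\mu)\in V_g(\mu)$ be the exact solution of the weak primal problem and $\sigma(\mu)\in\Sigma_{fg}(\mu)$ the exact solution of the dual problem. Then $$|\!|\!|u(\mu)-u_h(\mu)|\!|\!|_\mu\le|\!|\!|u(\mu)-u^N_{rb}(\mu)|\!|\!|_\mu,\qquad \|\sigma(\mu)-\sigma_h(\mu)\|_{R,\mu}\le\|\sigma(\mu)-\sigma^N_{rb}(\mu)\|_{R,\mu},$$ $$|\!|\!|(u(\mu)-u_h(\mu),\sigma(\mu)-\sigma_h(\mu))|\!|\!|_\mu\le|\!|\!|(u(\mu)-u^N_{rb}(\mu),\sigma(\mu)-\sigma^N_{rb}(\mu))|\!|\!|_\mu.$$ If moreover $\mu\in S_N$, all three inequalities are equalities.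
   Context: Setting: $\Omega\subset\mathbb{R}^d$ ($d=2,3$) bounded polyhedral Lipschitz; $(\cdot,\cdot)$ the (possibly vector) $L^2(\Omega)$ inner product, $\|\cdot\|_0$ its norm, $(\cdot,\cdot)_\Gamma$ the $L^2$ product on $\Gamma\subset\partial\Omega$. $V$ a Hilbert space compactly embedded in $L^2(\Omega)$, $\Lambda:V\to L^2(\Omega)$ linear continuous, $\Lambda^t$ its formal adjoint, $\Sigma=\{\tau\in L^2(\Omega):\Lambda^t\tau\in L^2(\Omega)\}$, traces $\mathrm{tr}_0$ on $V$, $\mathrm{tr}_1$ on $\Sigma$ with $(\tau,\Lambda v)-(\Lambda^t\tau,v)=(\mathrm{tr}_1\tau,\mathrm{tr}_0v)_{\partial\Omega}$. $\partial\Omega=\overline\Gamma_D\cup\overline\Gamma_N$ disjoint, $\mathrm{meas}(\Gamma_D)\ne0$. $V_0=\{v\in V:\mathrm{tr}_0v=0\text{ on }\Gamma_D\}$, $\Sigma_0=\{\tau\in\Sigma:\mathrm{tr}_1\tau=0\text{ on }\Gamma_N\}$, $\Sigma_{00}=\{\tau\in\Sigma_0:\Lambda^t\tau=0\}$; $\|\Lambda v\|_0\ge c_3\|v\|_0$ on $V_0$; continuous inf-sup $\sup_{\tau\in\Sigma}\frac{(\Lambda^t\tau,v)}{\|\tau\|_0+\|\Lambda^t\tau\|_0}\ge\beta\|v\|_0$. Parameters $\mu$ range over a set $\mathcal{D}$; for each $\mu$, $\mathcal{A}(\mu)$ is self-adjoint on $L^2(\Omega)$ with $c_1\|q\|_0^2\le(\mathcal{A}(\mu)q,q)\le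 c_2\|q\|_0^2$, and data $f(\mu),g_D(\mu),g_N(\mu)\in L^2$ describe $\Lambda^t(\mathcal{A}(\mu)\Lambda u)=f(\mu)$, $\mathrm{tr}_0u=g_D(\mu)$ on $\Gamma_D$, $-\mathrm{tr}_1(\mathcal{A}(\mu)\Lambda u)=g_N(\mu)$ on $\Gamma_N$. $a(v,w;\mu)=(\mathcal{A}(\mu)\Lambda v,\Lambda w)$, $b(\rho,\tau;\mu)=(\mathcal{A}(\mu)^{-1}\rho,\tau)$, $c((\rho,w),(\tau,v);\mu)=b(\rho,\tau;\mu)+(\Lambda^t\tau,w)+(\Lambda^t\rho,v)$. $V_g(\mu)=\{v\in V:\mathrm{tr}_0v=g_D(\mu)\text{ on }\Gamma_D\}$, $\Sigma_{fg}(\mu)=\{\tau\in\Sigma:\Lambda^t\tau=-f(\mu),\ \mathrm{tr}_1\tau=g_N(\mu)\text{ on }\Gamma_N\}$. Exact solutions: $u(\mu)\in V_g(\mu)$ with $a(u(\mu),v;\mu)=(f(\mu),v)-(g_N(\mu),\mathrm{tr}_0v)_{\Gamma_N}$ for all $v\in V_0$; $\sigma(\mu)\in\Sigma_{fg}(\mu)$ with $b(\sigma(\mu),\tau;\mu)=-(\mathrm{tr}_1\tau,g_D(\mu))_{\Gamma_D}$ for all $\tau\in\Sigma_{00}$. Norms: $|\!|\!|v|\!|\!|_\mu=\sqrt{a(v,v;\mu)}$, $\|\tau\|_{R,\mu}=\sqrt{b(\tau,\tau;\mu)}$, $|\!|\!|(v,\tau)|\!|\!|_\mu=\sqrt{|\!|\!|v|\!|\!|_\mu^2+\|\tau\|_{R,\mu}^2}$.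 Finite elements: $V_h\subset V$, $D_h\subset L^2(\Omega)$, $\Sigma_h\subset\Sigma$ finite element spaces with $\Lambda^t\Sigma_h=D_h$ and the pair $(\Sigma_h,D_h)$ satisfying a discrete inf-sup condition; $V_{0,h}=V_h\cap V_0$, $\Sigma_{0,h}=\Sigma_h\cap\Sigma_0$. For each $\mu$ fixed lifts $u_g(\mu)\in V_h\cap V_g(\mu)$ and $\sigma_{fg}(\mu)\in\Sigma_h\cap\Sigma_{fg}(\mu)$ are given (data assumed compatible so these exist, and $f(\mu)\in D_h$). Let $\varphi(v;\mu)=(f(\mu),v)-(g_N(\mu),\mathrm{tr}_0v)_{\Gamma_N}-a(u_g(\mu),v;\mu)$ and $\psi(\tau;\mu)=-(\mathrm{tr}_1\tau,g_D(\mu))_{\Gamma_D}-b(\sigma_{fg}(\mu),\tau;\mu)$. FE primal solution: $u_h(\mu)=u_{0,h}(\mu)+u_g(\mu)$ with $u_{0,h}(\mu)\in V_{0,h}$ and $a(u_{0,h}(\mu),v;\mu)=\varphi(v;\mu)$ for all $v\in V_{0,h}$. FE dual solution: $\sigma_h(\mu)=\sigma_{00,h}(\mu)+\sigma_{fg}(\mu)$ where $(\sigma_{00,h}(\mu),w_h)\in\Sigma_{0,h}\times D_h$ solves $c((\sigma_{00,h}(\mu),w_h),(\tau,v);\mu)=\psi(\tau;\mu)$ for all $(\tau,v)\in\Sigma_{0,h}\times D_h$. Reduced basis: $S_N=\{\mu_i\}_{i=1}^N\subset\mathcal{D}$, $V^N_{rb}=\mathrm{span}\{u_{0,h}(\mu_i)\}_{i=1}^N$,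 $\Sigma^N_{rb}=\mathrm{span}\{\sigma_{00,h}(\mu_i)\}_{i=1}^N$ (snapshots computed with the same lifts). RB primal solution: $u^N_{rb}(\mu)=u^N_{0,rb}(\mu)+u_g(\mu)$ with $u^N_{0,rb}(\mu)\in V^N_{rb}$, $a(u^N_{0,rb}(\mu),v;\mu)=\varphi(v;\mu)$ for all $v\in V^N_{rb}$. RB dual solution: $\sigma^N_{rb}(\mu)=\sigma^N_{00,rb}(\mu)+\sigma_{fg}(\mu)$ with $\sigma^N_{00,rb}(\mu)\in\Sigma^N_{rb}$, $b(\sigma^N_{00,rb}(\mu),\tau;\mu)=\psi(\tau;\mu)$ for all $\tau\in\Sigma^N_{rb}$. *)

(* Defs.v *)
From HB Require Import structures.
From mathcomp Require Import all_boot all_order all_algebra.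
From mathcomp Require Import all_classical all_reals.
Set Implicit Arguments. Unset Strict Implicit. Unset Printing Implicit Defensive.
Import Order.TTheory GRing.Theory Num.Theory.
Local Open Scope classical_set_scope.
Local Open Scope ring_scope.

Section LinAlg.
Variable R : realType.

Definition semi_inner_product (T : lmodType R) (ip : T -> T -> R) : Prop :=
  (forall x y, ip x y = ip y x) /\
  (forall (a : R) x y z, ip (a *: x + y) z = a * ip x z + ip y z) /\
  (forall x, 0 <= ip x x).

Definition inner_product (T : lmodType R) (ip : T -> T -> R) : Prop :=
  semi_inner_product ip /\ (forall x, ip x x = 0 -> x = 0).

Definition ipnorm (T : lmodType R) (ip : T -> T -> R) (x : T) : R :=
  Num.sqrt (ip x x).

Definition subspace (T : lmodType R) (X : set T) : Prop :=
  X 0 /\ (forall (a : R) x y, X x -> X y -> X (a *: x + y)).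

Definition fspan (T : lmodType R) (n : nat) (e : 'I_n -> T) : set T :=
  [set x | exists c : 'I_n -> R, x = \sum_(i < n) c i *: e i].

Definition finite_dim (T : lmodType R) (X : set T) : Prop :=
  exists n (e : 'I_n -> T), X = fspan e.
End LinAlg.

(*  HV : the L^2 space containing V, f, Lambda^t tau  (L^2(Omega))     *)
(*  HS : the (possibly vector) L^2 space containing Lambda v, Sigma    *)
(*  HB : L^2(partial Omega); ipD / ipN are the L^2 products on         *)
(*       Gamma_D / Gamma_N, and ipD + ipN is the product on the        *)
(*       whole boundary.                                               *)
Record setting (R : realType) (P : Type) (HV HS HB : lmodType R) := Setting {
  ipV : HV -> HV -> R;
  ipV_ip : inner_product ipV;
  ipS : HS -> HS -> R;
  ipS_ip : inner_product ipS;
  ipD : HB -> HB -> R;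
  ipN : HB -> HB -> R;
  ipD_sip : semi_inner_product ipD;
  ipN_sip : semi_inner_product ipN;
  ipB_ip : inner_product (fun x y => ipD x y + ipN x y);
  GammaD_nontriv : exists w, ipD w w != 0;
  (* the space V, identified with its image in L^2 *)
  Vsp : set HV;
  Vsp_sub : subspace Vsp;
  Lam : {linear HV -> HS};
  Lamt : {linear HS -> HV};
  Sig : set HS;
  Sig_sub : subspace Sig;
  tr0 : {linear HV -> HB};
  tr1 : {linear HS -> HB};
  green : forall tau v, Sig tau -> Vsp v ->
    ipS tau (Lam v) - ipV (Lamt tau) v
      = ipD (tr1 tau) (tr0 v) + ipN (tr1 tau) (tr0 v);
  c3 : R;
  c3_gt0 : 0 < c3;
  poincare : forall v, Vsp v -> ipD (tr0 v) (tr0 v) = 0 ->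
    ipnorm ipS (Lam v) >= c3 * ipnorm ipV v;
  beta : R;
  beta_gt0 : 0 < beta;
  infsup : forall v : HV,
    sup [set ipV (Lamt tau) v / (ipnorm ipS tau + ipnorm ipV (Lamt tau))
        | tau in Sig] >= beta * ipnorm ipV v;
  Aop : P -> {linear HS -> HS};
  Ainv : P -> {linear HS -> HS};
  AinvK : forall mu q, Ainv mu (Aop mu q) = q;
  AK : forall mu q, Aop mu (Ainv mu q) = q;
  A_selfadj : forall mu p q, ipS (Aop mu p) q = ipS p (Aop mu q);
  c1 : R; c2 : R;
  c1_gt0 : 0 < c1;
  c2_gt0 : 0 < c2;
  A_bounds : forall mu q,
    c1 * ipS q q <= ipS (Aop mu q) q /\ ipS (Aop mu q) q <= c2 * ipS q q;
  fdat : P -> HV;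
  gD : P -> HB;
  gN : P -> HB
}.

Section Derived.
Variables (R : realType) (P : Type) (HV HS HB : lmodType R).
Variable S : @setting R P HV HS HB.

(* "w = 0 on Gamma_D" means the L^2(Gamma_D) norm of w vanishes *)
Definition V0 : set HV :=
  [set v | Vsp S v /\ ipD S (tr0 S v) (tr0 S v) = 0].
Definition Sig0 : set HS :=
  [set tau | Sig S tau /\ ipN S (tr1 S tau) (tr1 S tau) = 0].
Definition Sig00 : set HS :=
  [set tau | Sig0 tau /\ Lamt S tau = 0].
Definition Vg (mu : P) : set HV :=
  [set v | Vsp S v /\
     ipD S (tr0 S v - gD S mu) (tr0 S v - gD S mu) = 0].
Definition Sigfg (mu : P) : set HS :=
  [set tau | Sig S tau /\ Lamt S tau = - fdat S mu /\
     ipN S (tr1 S tau - gN S mu) (tr1 S tau - gN S mu) = 0].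

Definition aform (mu : P) (v w : HV) : R := ipS S (Aop S mu (Lam S v)) (Lam S w).
Definition bform (mu : P) (rho tau : HS) : R := ipS S (Ainv S mu rho) tau.
Definition cform (mu : P) (rw tv : HS * HV) : R :=
  bform mu rw.1 tv.1 + ipV S (Lamt S tv.1) rw.2 + ipV S (Lamt S rw.1) tv.2.

Definition primal_rhs (mu : P) (v : HV) : R :=
  ipV S (fdat S mu) v - ipN S (gN S mu) (tr0 S v).
Definition dual_rhs (mu : P) (tau : HS) : R :=
  - ipD S (tr1 S tau) (gD S mu).

Definition phi (ug : P -> HV) (mu : P) (v : HV) : R :=
  primal_rhs mu v - aform mu (ug mu) v.
Definition psi (sfg : P -> HS) (mu : P) (tau : HS) : R :=
  dual_rhs mu tau - bform mu (sfg mu) tau.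

Definition enorm (mu : P) (v : HV) : R := Num.sqrt (aform mu v v).
Definition rnorm (mu : P) (tau : HS) : R := Num.sqrt (bform mu tau tau).
Definition pnorm (mu : P) (v : HV) (tau : HS) : R :=
  Num.sqrt (enorm mu v ^+ 2 + rnorm mu tau ^+ 2).
End Derived.

Record fe_spaces (R : realType) (P : Type) (HV HS HB : lmodType R)
    (S : @setting R P HV HS HB) := FESpaces {
  Vh : set HV;
  Dh : set HV;
  Sh : set HS;
  Vh_sub : subspace Vh;
  Dh_sub : subspace Dh;
  Sh_sub : subspace Sh;
  Vh_fin : finite_dim Vh;
  Dh_fin : finite_dim Dh;
  Sh_fin : finite_dim Sh;
  Vh_V : Vh `<=` Vsp S;
  Sh_Sig : Sh `<=` Sig S;
  Lamt_Sh : Lamt S @` Sh = Dh;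
  betah : R;
  betah_gt0 : 0 < betah;
  infsup_h : forall v, Dh v ->
    sup [set ipV S (Lamt S tau) v /
             (ipnorm (ipS S) tau + ipnorm (ipV S) (Lamt S tau)) | tau in Sh]
      >= betah * ipnorm (ipV S) v
}.

Definition V0h (R : realType) (P : Type) (HV HS HB : lmodType R)
  (S : @setting R P HV HS HB) (F : fe_spaces S) : set HV :=
  Vh F `&` V0 S.
Definition Sig0h (R : realType) (P : Type) (HV HS HB : lmodType R)
  (S : @setting R P HV HS HB) (F : fe_spaces S) : set HS :=
  Sh F `&` Sig0 S.

(* Main.v *)
Require Import Defs.
From HB Require Import structures.
From mathcomp Require Import all_boot all_order all_algebra.
From mathcomp Require Import all_classical all_reals.
Set Implicit Arguments. Unset Strict Implicit.
Import Order.TTheory GRing.Theory Num.Theory.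
Local Open Scope classical_set_scope.
Local Open Scope ring_scope.

Section Abs.
Variables (R : realType) (T : lmodType R) (f : T -> T -> R).
Hypothesis fsym : forall x y, f x y = f y x.
Hypothesis flin : forall (a : R) x y z, f (a *: x + y) z = a * f x z + f y z.
Hypothesis fpos : forall x, 0 <= f x x.

Lemma f0l z : f 0 z = 0.
Proof.
have := flin 1 0 0 z; rewrite scale1r addr0 mul1r => h.
by apply: (addrI (f 0 z)); rewrite addr0 -h.
Qed.
Lemma f0r z : f z 0 = 0. Proof. by rewrite fsym f0l. Qed.
Lemma fDl x y z : f (x + y) z = f x z + f y z.
Proof. by rewrite -[x in LHS]scale1r flin mul1r. Qed.
Lemma fZl a x z : f (a *: x) z = a * f x z.
Proof. by rewrite -[_ *: _]addr0 flin f0l addr0. Qed.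
Lemma fNl x z : f (- x) z = - f x z.
Proof. by rewrite -scaleN1r fZl mulN1r. Qed.
Lemma fBl x y z : f (x - y) z = f x z - f y z.
Proof. by rewrite fDl fNl. Qed.
Lemma fDr x y z : f z (x + y) = f z x + f z y.
Proof. by rewrite fsym fDl !(fsym z). Qed.
Lemma fBr x y z : f z (x - y) = f z x - f z y.
Proof. by rewrite fsym fBl !(fsym z). Qed.

Lemma fsumr N (g : 'I_N -> T) (c : 'I_N -> R) x :
  (forall i, f x (g i) = 0) -> f x (\sum_(i < N) c i *: g i) = 0.
Proof.
move=> h; rewrite fsym.
apply: (big_rec (fun y => f y x = 0)); first exact: f0l.
by move=> i y _ hy; rewrite flin hy fsym h mulr0 addr0.
Qed.

Lemma fspan_sub N (g : 'I_N -> T) x y : fspan g x -> fspan g y -> fspan g (x - y).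
Proof.
move=> [c ->] [d ->]; exists (fun i => c i - d i).
by rewrite -sumrB; apply: eq_bigr => i _; rewrite scalerBl.
Qed.

Lemma fspan_gen N (g : 'I_N -> T) i : fspan g (g i).
Proof.
exists (fun j => (j == i)%:R).
rewrite (bigD1 i) //= eqxx scale1r big1 ?addr0 // => j /negbTE ->.
by rewrite scale0r.
Qed.

Lemma galerkin N (g : 'I_N -> T) (E w rb : T)
  (h1 : forall i, f (E - w) (g i) = 0) (h2 : f (E - w) w = 0)
  (hrb : fspan g rb) (h3 : forall i, f (E - rb) (g i) = 0) :
  f (E - w) (E - w) <= f (E - rb) (E - rb) /\
  (fspan g w -> f (E - w) (E - w) = f (E - rb) (E - rb)).
Proof.
have hd : f (E - w) (w - rb) = 0.
  case: hrb => c ->; rewrite fBr h2 fsumr // subr0 //.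
have eq : E - rb = (E - w) + (w - rb) by rewrite addrA subrK.
have exp : f (E - rb) (E - rb) = f (E - w) (E - w) + f (w - rb) (w - rb).
  rewrite eq fDl (fDr (E - w) (w - rb) (E - w)) (fDr (E - w) (w - rb) (w - rb)).
  by rewrite hd (fsym (w - rb) (E - w)) hd addr0 add0r.
split; first by rewrite exp lerDl.
move=> hw.
have hd2 : f (E - rb) (w - rb) = 0.
  by case: (fspan_sub hw hrb) => c ->; rewrite fsumr.
have : f (w - rb) (w - rb) = 0.
  rewrite {1}(_ : w - rb = (E - rb) - (E - w)); last first.
    by rewrite opprB [RHS]addrC addrA subrK.
  by rewrite fBl hd2 hd subrr.
by move=> h0; rewrite exp h0 addr0.
Qed.
End Abs.

Unset Implicit Arguments.
Theorem theorem5p7 (R : realType) (P : Type) (HV HS HB : lmodType R)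
  (S : @setting R P HV HS HB) (F : fe_spaces S)
  (* lifts and data compatibility *)
  (ug : P -> HV) (sfg : P -> HS)
  (hug : forall mu, Vh F (ug mu) /\ Vg S mu (ug mu))
  (hsfg : forall mu, Sh F (sfg mu) /\ Sigfg S mu (sfg mu))
  (hf : forall mu, Dh F (fdat S mu))
  (* FE primal solutions u_h = u0h + ug *)
  (u0h : P -> HV)
  (hu0h : forall mu, V0h F (u0h mu) /\
     forall v, V0h F v -> aform S mu (u0h mu) v = phi S ug mu v)
  (* FE dual solutions sigma_h = s00h + sfg *)
  (s00h : P -> HS) (wh : P -> HV)
  (hs00h : forall mu, Sig0h F (s00h mu) /\ Dh F (wh mu) /\
     forall tau v, Sig0h F tau -> Dh F v ->
       cform S mu (s00h mu, wh mu) (tau, v) = psi S sfg mu tau)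
  (* reduced basis snapshots S_N *)
  (N : nat) (mus : 'I_N -> P)
  (mu : P)
  (* exact solutions *)
  (u : HV)
  (hu : Vg S mu u /\ forall v, V0 S v -> aform S mu u v = primal_rhs S mu v)
  (sigma : HS)
  (hsigma : Sigfg S mu sigma /\
     forall tau, Sig00 S tau -> bform S mu sigma tau = dual_rhs S mu tau)
  (* RB solutions *)
  (u0rb : HV)
  (hu0rb : fspan (fun i => u0h (mus i)) u0rb /\
     forall v, fspan (fun i => u0h (mus i)) v ->
       aform S mu u0rb v = phi S ug mu v)
  (s00rb : HS)
  (hs00rb : fspan (fun i => s00h (mus i)) s00rb /\
     forall tau, fspan (fun i => s00h (mus i)) tau ->
       bform S mu s00rb tau = psi S sfg mu tau) :
  enorm S mu (u - (u0h mu + ug mu)) <= enorm S mu (u - (u0rb + ug mu)) /\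
  rnorm S mu (sigma - (s00h mu + sfg mu)) <= rnorm S mu (sigma - (s00rb + sfg mu)) /\
  pnorm S mu (u - (u0h mu + ug mu)) (sigma - (s00h mu + sfg mu))
    <= pnorm S mu (u - (u0rb + ug mu)) (sigma - (s00rb + sfg mu)) /\
  ((exists i, mu = mus i) ->
    enorm S mu (u - (u0h mu + ug mu)) = enorm S mu (u - (u0rb + ug mu)) /\
    rnorm S mu (sigma - (s00h mu + sfg mu)) = rnorm S mu (sigma - (s00rb + sfg mu)) /\
    pnorm S mu (u - (u0h mu + ug mu)) (sigma - (s00h mu + sfg mu))
      = pnorm S mu (u - (u0rb + ug mu)) (sigma - (s00rb + sfg mu))).
Proof.
have [ipSsym [ipSlin ipSpos]] := (ipS_ip S).1.
have [ipVsym [ipVlin ipVpos]] := (ipV_ip S).1.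
have ipVdef := (ipV_ip S).2.
have [ipNsym [ipNlin ipNpos]] := ipN_sip S.
have [ipDsym [ipDlin ipDpos]] := ipD_sip S.
have asym : forall x y, aform S mu x y = aform S mu y x.
  by move=> x y; rewrite /aform A_selfadj ipSsym.
have alin : forall (a : R) x y z,
    aform S mu (a *: x + y) z = a * aform S mu x z + aform S mu y z.
  by move=> a x y z; rewrite /aform !linearP ipSlin.
have apos : forall x, 0 <= aform S mu x x.
  move=> x; rewrite /aform; have [h _] := A_bounds S mu (Lam S x).
  apply: le_trans h; apply: mulr_ge0; [exact: ltW (c1_gt0 S) | exact: ipSpos].
have bsym : forall x y, bform S mu x y = bform S mu y x.
  move=> x y; rewrite /bform -{1}(AK S mu y) -A_selfadj AK ipSsym //.
have blin : forall (a : R) x y z,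
    bform S mu (a *: x + y) z = a * bform S mu x z + bform S mu y z.
  by move=> a x y z; rewrite /bform !linearP ipSlin.
have bpos : forall x, 0 <= bform S mu x x.
  move=> x; rewrite /bform -{2}(AK S mu x) -A_selfadj.
  have [h _] := A_bounds S mu (Ainv S mu x).
  apply: le_trans h; apply: mulr_ge0; [exact: ltW (c1_gt0 S) | exact: ipSpos].
have hV0 : forall v, V0h F v -> aform S mu (u - ug mu - u0h mu) v = 0.
  move=> v hv; rewrite !(fBl alin) (hu.2 v hv.2) ((hu0h mu).2 v hv) /phi.
  by rewrite subrr.
have [Pin Peq] := @galerkin _ _ _ asym alin apos N (fun i => u0h (mus i))
   (u - ug mu) (u0h mu) u0rb (fun i => hV0 _ (hu0h (mus i)).1)
   (hV0 _ (hu0h mu).1) hu0rb.1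
   (fun i => ltac:(rewrite !(fBl alin) (hu.2 _ (hu0h (mus i)).1.2)
       (hu0rb.2 _ (fspan_gen _ i)) /phi subrr //)).
have Lam0 : forall nu, Lamt S (s00h nu) = 0.
  move=> nu; have [[hSh hS0] [hwh hc]] := hs00h nu.
  have h0 : Sig0h F 0.
    split; first exact: (Sh_sub F).1.
    split; first exact: (Sig_sub S).1.
    by rewrite linear0 (f0l ipNlin).
  have hD : Dh F (Lamt S (s00h nu)) by rewrite -(Lamt_Sh F); exists (s00h nu).
  have := hc 0 _ h0 hD.
  rewrite /cform /psi /dual_rhs /bform /= !linear0 (f0l ipDlin) oppr0.
  rewrite (f0l ipVlin) (f0r ipSsym ipSlin) (f0r ipSsym ipSlin) !add0r oppr0.
  exact: ipVdef.
have hS00 : forall tau, Sig0h F tau -> Lamt S tau = 0 ->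
    bform S mu (sigma - sfg mu - s00h mu) tau = 0.
  move=> tau htau hL.
  have [[hSh hS0] [hwh hc]] := hs00h mu.
  have := hc tau 0 htau (Dh_sub F).1.
  rewrite /cform /= hL (f0l ipVlin) (f0r ipVsym ipVlin) !addr0 => hb.
  rewrite !(fBl blin) hb (hsigma.2 tau (conj htau.2 hL)) /psi.
  by rewrite subrr.
have [Din Deq] := @galerkin _ _ _ bsym blin bpos N (fun i => s00h (mus i))
   (sigma - sfg mu) (s00h mu) s00rb
   (fun i => hS00 _ (hs00h (mus i)).1 (Lam0 _))
   (hS00 _ (hs00h mu).1 (Lam0 mu)) hs00rb.1
   (fun i => ltac:(rewrite !(fBl blin)
       (hsigma.2 _ (conj (hs00h (mus i)).1.2 (Lam0 _)))
       (hs00rb.2 _ (fspan_gen _ i)) /psi subrr //)).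
have e1 : forall (T : lmodType R) (a b c : T), a - (b + c) = a - c - b.
  by move=> T a b c; rewrite opprD addrA addrAC.
rewrite /pnorm /enorm /rnorm !e1.
rewrite !sqr_sqrtr //.
split; first exact: ler_wsqrtr.
split; first exact: ler_wsqrtr.
split; first by apply: ler_wsqrtr; apply: lerD.
move=> [i hi].
have hw : fspan (fun i => u0h (mus i)) (u0h mu) by rewrite hi; exact: fspan_gen.
have hw' : fspan (fun i => s00h (mus i)) (s00h mu) by rewrite hi; exact: fspan_gen.
have E1 := Peq hw. have E2 := Deq hw'.
rewrite E1 E2.
by split; [reflexivity | split; reflexivity].
Qed.
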